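(* If $(A,\pi_A)$, $(B,\pi_B)$, $(C,\pi_C)$ are signed graphs such that $(A,\pi_A)\,\square\,(B,\pi_B)\equiv(A,\pi_A)\,\square\,(C,\pi_C)$, then $(B,\pi_B)\equiv(C,\pi_C)$.
   Context: A signed graph $(G,\sigma)$ is a simple loopless undirected graph with a signature $\sigma:E(G)\to\{+1,-1\}$. Switching a vertex negates the signs of its incident edges. Two signed graphs are equivalent ($\equiv$) if there is a graph isomorphism between them carrying one signature to a signature obtained from the other by switching a set of vertices. The Cartesian product $(G,\sigma)\,\square\,(H,\pi)$ is the signed graph on $G\,\square\,H$ where $(u,v_1)(u,v_2)$ has sign $\pi(v_1v_2)$ and $(u_1,v)(u_2,v)$ has sign $\sigma(u_1u_2)$. *)

(* Defs.v *)
From mathcomp Require Import all_boot.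
Set Implicit Arguments. Unset Strict Implicit. Unset Printing Implicit Defensive.

(* Signs are booleans:
   [false] = +1, [true] = -1.  The signature is stored as a symmetric
   function on ordered pairs; only its values on edges matter. *)
Record sgraph := SGraph {
  sv :> finType;
  sadj : rel sv;
  ssgn : sv -> sv -> bool;
  sadj_sym : forall x y, sadj x y = sadj y x;
  sadj_irr : forall x, sadj x x = false;
  ssgn_sym : forall x y, ssgn x y = ssgn y x
}.

Definition sg_equiv (G H : sgraph) : Prop :=
  exists f : G -> H, bijective f /\
    (forall x y, @sadj H (f x) (f y) = @sadj G x y) /\
    exists U : {set G}, forall x y, @sadj G x y ->
      @ssgn H (f x) (f y) = @ssgn G x y (+) (x \in U) (+) (y \in U).

Section Prod.
Variables G H : sgraph.
Definition cp_adj : rel (G * H)%type := fun p q =>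
  ((p.1 == q.1) && @sadj H p.2 q.2) || ((p.2 == q.2) && @sadj G p.1 q.1).
Definition cp_sgn (p q : G * H) : bool :=
  if p.1 == q.1 then @ssgn H p.2 q.2 else @ssgn G p.1 q.1.
Lemma cp_adj_sym p q : cp_adj p q = cp_adj q p.
Proof. by rewrite /cp_adj eq_sym (@sadj_sym H) (eq_sym p.2) (@sadj_sym G). Qed.
Lemma cp_adj_irr p : cp_adj p p = false.
Proof. by rewrite /cp_adj (@sadj_irr H) (@sadj_irr G) !andbF. Qed.
Lemma cp_sgn_sym p q : cp_sgn p q = cp_sgn q p.
Proof. by rewrite /cp_sgn eq_sym (@ssgn_sym H) (@ssgn_sym G). Qed.
Definition cprod : sgraph := SGraph cp_adj_sym cp_adj_irr cp_sgn_sym.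
End Prod.

(* Main.v *)
Require Import Defs.
From mathcomp Require Import all_boot all_order all_algebra.
From mathcomp Require Import ring lra zify.
Set Implicit Arguments. Unset Strict Implicit. Unset Printing Implicit Defensive.
Import GRing.Theory Num.Theory.
Local Open Scope ring_scope.

Definition Mx (G : sgraph) (x y : G) : int := if sadj x y then (-1) ^+ ssgn x y else 0.
Definition dl (G : sgraph) (x y : G) : int := (x == y)%:R.
Definition mono (G : sgraph) (P : finType) (S T : seq (P * P)) (f : P -> G) : int :=
  (\prod_(e <- S) Mx (f e.1) (f e.2)) * \prod_(e <- T) dl (f e.1) (f e.2).
Definition gc (G : sgraph) (P : finType) (S T : seq (P * P)) : int :=
  \sum_(f : {ffun P -> G}) mono S T f.
Definition xorS (P : Type) (c : P -> bool) (S : seq (P * P)) : bool :=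
  foldr (fun e b => c e.1 (+) c e.2 (+) b) false S.
Definition good (P : Type) (S T : seq (P * P)) : Prop :=
  forall c : P -> bool, all (fun e => c e.1 == c e.2) T -> xorS c S = false.

Lemma prod_sign (P : Type) (c : P -> bool) S (F : P * P -> int) :
  \prod_(e <- S) ((-1) ^+ (c e.1 (+) c e.2) * F e) =
  (-1) ^+ (xorS c S) * \prod_(e <- S) F e.
Proof.
elim: S => [|e S IH]; first by rewrite !big_nil mulr1.
rewrite !big_cons IH /= [in RHS]signr_addb.
move: ((-1) ^+ (c e.1 (+) c e.2) : int) ((-1) ^+ xorS c S : int) (F e) (\prod_(_ <- _) _) => u v w z.
ring.
Qed.

Lemma prod0_seq (I : eqType) (r : seq I) (F : I -> int) :
  (exists2 e, e \in r & F e = 0) -> \prod_(e <- r) F e = 0.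
Proof.
case=> e er Fe; apply/eqP; rewrite prodf_seq_eq0; apply/hasP; exists e => //.
by rewrite Fe eqxx.
Qed.

Lemma xorS_const (P : Type) (c : P -> bool) S :
  all (fun e => c e.1 == c e.2) S -> xorS c S = false.
Proof.
elim: S => [|e S IH] //= /andP [/eqP -> /IH ->]; by rewrite addbb.
Qed.

Lemma gc_equiv (G H : sgraph) (P : finType) (S T : seq (P * P)) :
  sg_equiv G H -> good S T -> gc G S T = gc H S T.
Proof.
case=> f [[g fK gK] [adjf [U hU]]] hgood.
rewrite /gc (reindex (fun phi : {ffun P -> G} => [ffun x => f (phi x)])); last first.
  exists (fun psi : {ffun P -> H} => [ffun x => g (psi x)]) => phi _;
  by apply/ffunP => x; rewrite !ffunE ?fK ?gK.
apply: eq_bigr => phi _; rewrite /mono.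
have Hd : \prod_(e <- T) dl ([ffun x => f (phi x)] e.1) ([ffun x => f (phi x)] e.2)
        = \prod_(e <- T) dl (phi e.1) (phi e.2).
  by apply: eq_bigr => e _; rewrite /dl !ffunE (inj_eq (can_inj fK)).
have HM : forall x y, Mx (f x) (f y) = (-1) ^+ ((x \in U) (+) (y \in U)) * Mx x y.
  move=> x y; rewrite /Mx adjf; case: ifP => Hxy; last by rewrite mulr0.
  by rewrite hU // -addbA signr_addb mulrC.
have HM2 : \prod_(e <- S) Mx ([ffun x => f (phi x)] e.1) ([ffun x => f (phi x)] e.2)
   = \prod_(e <- S) ((-1) ^+ ((phi e.1 \in U) (+) (phi e.2 \in U)) * Mx (phi e.1) (phi e.2)).
  by apply: eq_bigr => e _; rewrite !ffunE HM.
rewrite Hd HM2.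
rewrite (prod_sign (fun x => phi x \in U)).
case Hall: (all (fun e => phi e.1 == phi e.2) T).
  rewrite hgood ?expr0 ?mul1r //.
  by apply/allP => e /(allP Hall) /eqP ->.
rewrite (@prod0_seq _ T (fun e => dl (phi e.1) (phi e.2))) ?mulr0 //.
case/allPn: (negbT Hall) => e eT ne; exists e => //.
by rewrite /dl (negbTE ne).
Qed.

Fixpoint allbits (n : nat) : seq (seq bool) :=
  if n is n'.+1 then [seq false :: t | t <- allbits n'] ++ [seq true :: t | t <- allbits n']
  else [:: [::]].

Lemma allbits_size n t : t \in allbits n -> size t = n.
Proof.
elim: n t => [|n IH] t /=; first by rewrite inE => /eqP ->.
by rewrite mem_cat => /orP [] /mapP [t' /IH <- ->].
Qed.

Lemma allbits_false n : nseq n false \in allbits n.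
Proof.
elim: n => [|n IH] //=; by rewrite mem_cat map_f.
Qed.

Lemma expand (I : Type) (S : seq I) (a b : I -> int) :
  \prod_(e <- S) (a e + b e) =
  \sum_(t <- allbits (size S))
     (\prod_(e <- mask t S) a e) * \prod_(e <- mask (map negb t) S) b e.
Proof.
elim: S => [|x S IH]; first by rewrite !big_nil /= big_cons !big_nil mulr1 addr0.
rewrite big_cons IH /= big_cat !big_map /= mulrDl !mulr_sumr addrC.
by congr (_ + _); apply: eq_bigr => t _; rewrite /= big_cons; ring.
Qed.

Lemma sum_pair (P A B : finType) (F : {ffun P -> A * B} -> int) :
  \sum_(f : {ffun P -> A * B}) F f =
  \sum_(f1 : {ffun P -> A}) \sum_(f2 : {ffun P -> B}) F [ffun x => (f1 x, f2 x)].
Proof.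
rewrite pair_big /=.
rewrite (reindex (fun p : {ffun P -> A} * {ffun P -> B} => [ffun x => (p.1 x, p.2 x)])) //.
exists (fun f : {ffun P -> A * B} => ([ffun x => (f x).1], [ffun x => (f x).2])) => [[f1 f2]|f] _ /=.
  by congr pair; apply/ffunP => x; rewrite !ffunE.
by apply/ffunP => x; rewrite !ffunE; case: (f x).
Qed.

Lemma Mx_cprod (A B : sgraph) (p q : cprod A B) :
  Mx p q = Mx p.1 q.1 * dl p.2 q.2 + dl p.1 q.1 * Mx p.2 q.2.
Proof.
case: p q => [p1 p2] [q1 q2]; rewrite /Mx /dl /= /cp_adj /cp_sgn /=.
case: (eqVneq p1 q1) => [->|ne] /=.
  rewrite sadj_irr andbF orbF mul1r.
  by case: (sadj p2 q2); rewrite mul0r add0r.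
rewrite mul0r addr0.
case: (p2 == q2) => /=; first by rewrite mulr1.
by rewrite mulr0.
Qed.

Lemma dl_cprod (A B : sgraph) (p q : cprod A B) :
  dl p q = dl p.1 q.1 * dl p.2 q.2.
Proof.
case: p q => [p1 p2] [q1 q2]; rewrite /dl /=.
have -> : ((p1, p2) == (q1, q2) :> cprod A B) = (p1 == q1) && (p2 == q2) by [].
by case: (p1 == q1); case: (p2 == q2); rewrite ?mul0r ?mul1r.
Qed.

Lemma mono_cprod (A B : sgraph) (P : finType) (S T : seq (P * P))
   (f1 : P -> A) (f2 : P -> B) :
  mono (G := cprod A B) S T [ffun x => (f1 x, f2 x)] =
  \sum_(t <- allbits (size S))
    mono (mask t S) (mask (map negb t) S ++ T) f1 *
    mono (mask (map negb t) S) (mask t S ++ T) f2.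
Proof.
rewrite /mono.
rewrite (eq_bigr (fun e => Mx (f1 e.1) (f1 e.2) * dl (f2 e.1) (f2 e.2) +
   dl (f1 e.1) (f1 e.2) * Mx (f2 e.1) (f2 e.2))); last first.
  by move=> e _; rewrite !ffunE Mx_cprod.
rewrite (eq_bigr (fun e : P * P => dl (f1 e.1) (f1 e.2) * dl (f2 e.1) (f2 e.2))
  (P := xpredT) (r := T)); last first.
  by move=> e _; rewrite !ffunE dl_cprod.
rewrite expand big_split /= mulr_suml; apply: eq_bigr => t _.
rewrite !big_cat !big_split /=; ring.
Qed.

Lemma gc_cprod (A B : sgraph) (P : finType) (S T : seq (P * P)) :
  gc (cprod A B) S T =
  \sum_(t <- allbits (size S))
    gc A (mask t S) (mask (map negb t) S ++ T) *
    gc B (mask (map negb t) S) (mask t S ++ T).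
Proof.
rewrite /gc sum_pair.
under eq_bigr => f1 _ do under eq_bigr => f2 _ do rewrite mono_cprod.
under eq_bigr => f1 _ do rewrite exchange_big.
rewrite exchange_big; apply: eq_bigr => t _.
rewrite mulr_suml; apply: eq_bigr => f1 _; by rewrite mulr_sumr.
Qed.

Lemma xorS_mask (P : Type) (c : P -> bool) (S : seq (P * P)) (t : seq bool) :
  size t = size S ->
  xorS c S = xorS c (mask t S) (+) xorS c (mask (map negb t) S).
Proof.
elim: S t => [|e S IH] [|b t] //= [] /IH ->.
by case: b => /=; case: (c e.1); case: (c e.2); case: (xorS c (mask t S)); case: (xorS c (mask (map negb t) S)).
Qed.

Lemma good_mask (P : Type) (S T : seq (P * P)) (t : seq bool) :
  size t = size S -> good S T -> good (mask (map negb t) S) (mask t S ++ T).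
Proof.
move=> st hg c; rewrite all_cat => /andP [h1 h2].
have := hg c h2; rewrite (xorS_mask c st) xorS_const //.
Qed.

Lemma gc_pos (A : sgraph) (P : finType) (T : seq (P * P)) :
  (0 < #|A|)%N -> gc A [::] T != 0.
Proof.
case/card_gt0P => a0 _.
rewrite /gc psumr_eq0; last first.
  move=> f _; rewrite /mono big_nil mul1r; apply: prodr_ge0 => e _; exact: ler0n.
apply/allPn; exists [ffun=> a0]; first exact: mem_index_enum.
rewrite /mono big_nil mul1r big1 // => e _; by rewrite /dl !ffunE eqxx.
Qed.

Lemma count_neg_lt (t : seq bool) : t != nseq (size t) false -> (count negb t < size t)%N.
Proof.
elim: t => [|b t IH] //=; case: b => /=.
  by move=> _; rewrite ltnS count_size.
rewrite add1n ltnS => ne; apply: IH; apply: contra ne => /eqP e /=; by rewrite -e.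
Qed.

Lemma part1 (A B C : sgraph) (HA : (0 < #|A|)%N)
  (H : sg_equiv (cprod A B) (cprod A C)) (P : finType) :
  forall S T : seq (P * P), good S T -> gc B S T = gc C S T.
Proof.
have step : forall S T : seq (P * P),
    (forall S' T' : seq (P * P), (size S' < size S)%N -> good S' T' -> gc B S' T' = gc C S' T') ->
    good S T -> gc B S T = gc C S T.
  move=> S T IHs hg.
  have E := gc_equiv H hg.
  rewrite !gc_cprod in E.
  move: E; set n := size S => E.
  set t0 := nseq n false.
  have Hoth : forall t, t \in allbits n -> t != t0 ->
      gc B (mask (map negb t) S) (mask t S ++ T) = gc C (mask (map negb t) S) (mask t S ++ T).
    move=> t tin ne; have st := allbits_size tin.
    apply: IHs; last by apply: good_mask.
    rewrite size_mask ?size_map // count_map.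
    have -> : count (preim negb id) t = count negb t by apply: eq_count.
    rewrite -/n -st; apply: count_neg_lt; by rewrite st.
  move/eqP: E; rewrite -subr_eq0 -sumrB.
  under eq_bigr => t _ do rewrite -mulrBr.
  rewrite (bigID (fun t => t == t0)) /=.
  rewrite [X in _ + X]big1_seq ?addr0; last first.
    by move=> t /andP [ne tin]; rewrite Hoth // subrr mulr0.
  pose F := fun t : seq bool => gc A (mask t S) (mask [seq ~~ i | i <- t] S ++ T) *
     (gc B (mask [seq ~~ i | i <- t] S) (mask t S ++ T) - gc C (mask [seq ~~ i | i <- t] S) (mask t S ++ T)).
  rewrite -/(F _).
  rewrite (eq_bigr (fun _ => F t0 *+ 1)); last by move=> t /eqP ->.
  rewrite sumrMnr mulrn_eq0 sum1_count eqn0Ngt -has_count.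
  have -> : has (fun i => i == t0) (allbits n) by apply/hasP; exists t0 => //; exact: allbits_false.
  rewrite /F mulf_eq0 subr_eq0 /t0 mask_false map_nseq mask_true ?size_nseq // ?cat0s ?size_nseq.
  by rewrite (negbTE (gc_pos _ HA)) => /eqP.
suff: forall n (S T : seq (P * P)), (size S <= n)%N -> good S T -> gc B S T = gc C S T.
  by move=> h S T; apply: h.
elim=> [|n IH] S T hs hg; apply: step => // S' T' hs'.
  by move: (leq_trans hs' hs).
move=> hg'; apply: IH => //; by rewrite -ltnS (leq_trans hs' hs).
Qed.

Definition lc (P : Type) := seq (int * seq (P * P) * seq (P * P)).

Definition ev (G : sgraph) (P : finType) (d : P -> bool) (f : P -> G) (l : lc P) : int :=
  \sum_(q <- l) q.1.1 * ((-1) ^+ xorS d q.1.2 * mono q.1.2 q.2 f).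

Definition lcmul (P : Type) (l1 l2 : lc P) : lc P :=
  [seq (q1.1.1 * q2.1.1, q1.1.2 ++ q2.1.2, q1.2 ++ q2.2) | q1 <- l1, q2 <- l2].

Definition lc1 (P : Type) : lc P := [:: (1, [::], [::])].

Lemma xorS_cat (P : Type) (c : P -> bool) S1 S2 :
  xorS c (S1 ++ S2) = xorS c S1 (+) xorS c S2.
Proof. by elim: S1 => [|e S IH] //=; rewrite IH addbA. Qed.

Lemma ev_mul (G : sgraph) (P : finType) d (f : P -> G) l1 l2 :
  ev d f (lcmul l1 l2) = ev d f l1 * ev d f l2.
Proof.
rewrite /ev /lcmul big_allpairs_dep mulr_suml; apply: eq_bigr => q1 _.
rewrite mulr_sumr; apply: eq_bigr => q2 _ /=.
rewrite xorS_cat signr_addb /mono !big_cat /=.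
move: ((-1) ^+ xorS d q1.1.2 : int) ((-1) ^+ xorS d q2.1.2 : int) => u v.
ring.
Qed.

Lemma ev_lc1 (G : sgraph) (P : finType) d (f : P -> G) : ev d f (lc1 P) = 1.
Proof. by rewrite /ev big_cons big_nil /mono !big_nil /= !mulr1. Qed.

Lemma ev_foldr (G : sgraph) (P : finType) (I : Type) d (f : P -> G) (F : I -> lc P) r :
  ev d f (foldr (fun i acc => lcmul (F i) acc) (lc1 P) r) = \prod_(i <- r) ev d f (F i).
Proof.
elim: r => [|i r IH] /=; first by rewrite big_nil ev_lc1.
by rewrite ev_mul IH big_cons.
Qed.

Lemma evsum (G : sgraph) (P : finType) (l : lc P) :
  \sum_(d : {ffun P -> bool}) \sum_(f : {ffun P -> G}) ev d f l =
  \sum_(q <- l) q.1.1 * ((\sum_(d : {ffun P -> bool}) (-1) ^+ xorS d q.1.2) * gc G q.1.2 q.2).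
Proof.
rewrite /ev.
under eq_bigr => d _ do rewrite exchange_big.
rewrite exchange_big; apply: eq_bigr => q _.
rewrite /gc mulr_suml mulr_sumr; apply: eq_bigr => d _.
rewrite mulr_sumr mulr_sumr; apply: eq_bigr => f _; ring.
Qed.

Lemma xorS_xor (P : Type) (c d : P -> bool) S :
  xorS (fun x => c x (+) d x) S = xorS c S (+) xorS d S.
Proof.
elim: S => [|e S IH] //=; rewrite IH.
by case: (c e.1); case: (c e.2); case: (d e.1); case: (d e.2);
   case: (xorS c S); case: (xorS d S).
Qed.

Lemma sign_sum0 (P : finType) (S : seq (P * P)) (c : P -> bool) :
  xorS c S = true -> \sum_(d : {ffun P -> bool}) (-1) ^+ xorS d S = 0 :> int.
Proof.
move=> hc.
set X := \sum_(d : {ffun P -> bool}) _.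
have : X = - X.
  rewrite {1}/X (reindex (fun d : {ffun P -> bool} => [ffun x => d x (+) c x])); last first.
    exists (fun d : {ffun P -> bool} => [ffun x => d x (+) c x]) => d _;
    by apply/ffunP => x; rewrite !ffunE -addbA addbb addbF.
  rewrite /X -sumrN; apply: eq_bigr => d _.
  have -> : xorS [ffun x => d x (+) c x] S = xorS (fun x => d x (+) c x) S.
    by elim: (S) => [|e S' IH] //=; rewrite IH !ffunE.
  by rewrite xorS_xor hc addbT signrN.
lia.
Qed.

Lemma evsum_eq (A B C : sgraph) (HA : (0 < #|A|)%N)
  (H : sg_equiv (cprod A B) (cprod A C)) (P : finType) (l : lc P) :
  \sum_(d : {ffun P -> bool}) \sum_(f : {ffun P -> B}) ev d f l =
  \sum_(d : {ffun P -> bool}) \sum_(f : {ffun P -> C}) ev d f l.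
Proof.
rewrite !evsum; apply: eq_bigr => q _; congr (_ * _).
case: (boolP [exists c : {ffun P -> bool}, xorS c q.1.2]).
  case/existsP => c hc; by rewrite (sign_sum0 hc) !mul0r.
move=> hn; congr (_ * _); apply: (part1 HA H).
move=> c _; apply/negP => hc; move/existsP: hn; apply.
exists [ffun x => c x].
suff -> : xorS [ffun x => c x] q.1.2 = xorS c q.1.2 by [].
by elim: (q.1.2) {hc} => [|e S IH] //=; rewrite IH !ffunE.
Qed.

Definition lcI (B : sgraph) (x y : B) : lc B :=
  lcmul (if Mx x y == 0 then [:: (2, [::], [::]); (-2, [:: (x, y); (x, y)], [::])]
         else [:: (1, [:: (x, y); (x, y)], [::]); (Mx x y, [:: (x, y)], [::])])
        [:: (1, [::], [::]); (-1, [::], [:: (x, y)])].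

Lemma Mx_cases (G : sgraph) (u v : G) : [\/ Mx u v = 0, Mx u v = 1 | Mx u v = -1].
Proof. rewrite /Mx; case: sadj; [case: ssgn; rewrite ?expr0 ?expr1|]; by constructor. Qed.

Lemma ev_lcI (B G : sgraph) (d : B -> bool) (f : B -> G) (x y : B) :
  ev d f (lcI x y) =
  if ((-1) ^+ (d x (+) d y) * Mx (f x) (f y) == Mx x y) && (f x != f y) then 2 else 0.
Proof.
rewrite /lcI; case: (Mx_cases x y) => ->; rewrite ?eqxx ?oppr_eq0 ?oner_eq0 /=;
rewrite ev_mul /ev !big_cons !big_nil /mono !big_cons !big_nil /= /dl;
case: (Mx_cases (f x) (f y)) => ->;
case: (d x); case: (d y); case: (f x == f y); vm_compute; reflexivity.
Qed.

Definition Zs (B G : sgraph) : int :=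
  \sum_(d : {ffun B -> bool}) \sum_(f : {ffun B -> G})
     \prod_(p : B * B | p.1 != p.2) ev d f (lcI p.1 p.2).

Lemma Zs_eq (A B C : sgraph) (HA : (0 < #|A|)%N)
  (H : sg_equiv (cprod A B) (cprod A C)) : Zs B B = Zs B C.
Proof.
pose r := [seq p <- index_enum (B * B)%type | p.1 != p.2].
pose l := foldr (fun p acc => lcmul (lcI p.1 p.2) acc) (lc1 B) r.
have E : forall (G : sgraph) d (f : {ffun B -> G}),
    \prod_(p : B * B | p.1 != p.2) ev d f (lcI p.1 p.2) = ev d f l.
  by move=> G d f; rewrite /l ev_foldr /r big_filter.
rewrite /Zs.
under eq_bigr => d _ do under eq_bigr => f _ do rewrite E.
under [RHS]eq_bigr => d _ do under eq_bigr => f _ do rewrite E.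
exact: evsum_eq HA H B l.
Qed.

Lemma Zs_pos (B : sgraph) : Zs B B != 0.
Proof.
rewrite /Zs psumr_eq0; last first.
  move=> d _; apply: sumr_ge0 => f _; apply: prodr_ge0 => p _.
  by rewrite ev_lcI; case: ifP.
apply/allPn; exists [ffun=> false]; first exact: mem_index_enum.
rewrite psumr_eq0; last first.
  move=> f _; apply: prodr_ge0 => p _; by rewrite ev_lcI; case: ifP.
apply/allPn; exists [ffun x => x]; first exact: mem_index_enum.
rewrite /=; apply: lt0r_neq0; apply: prodr_gt0 => p ne.
by rewrite ev_lcI !ffunE /= expr0 mul1r eqxx ne.
Qed.

Lemma main_thm (A B C : sgraph) :
  (0 < #|A|)%N ->
  sg_equiv (cprod A B) (cprod A C) -> sg_equiv B C.
Proof.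
move=> HA H.
have hcard : #|B| = #|C|.
  have hc : gc B (P := unit) [::] [::] = gc C [::] [::] := part1 HA H (S := [::]) (T := [::]) (fun _ _ => erefl).
  move: hc; rewrite /gc /mono.
  under eq_bigr => f _ do rewrite !big_nil mulr1.
  under [in RHS]eq_bigr => f _ do rewrite !big_nil mulr1.
  rewrite !sumr_const !card_ffun card_unit !expn1 => /eqP.
  by rewrite eqr_nat => /eqP.
have hnz : Zs B C != 0 by rewrite -(Zs_eq HA H) Zs_pos.
have [[d f] /= hdf] : exists df : {ffun B -> bool} * {ffun B -> C},
    \prod_(p : B * B | p.1 != p.2) ev df.1 df.2 (lcI p.1 p.2) != 0.
  case: (pickP (fun df : {ffun B -> bool} * {ffun B -> C} =>
     \prod_(p : B * B | p.1 != p.2) ev df.1 df.2 (lcI p.1 p.2) != 0)) => [df h|h0].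
    by exists df.
  move: hnz; rewrite /Zs big1 ?eqxx // => d _; rewrite big1 // => f _.
  by move: (h0 (d, f)) => /= /negbFE /eqP.
have hfac : forall x y : B, x != y ->
    ((-1) ^+ (d x (+) d y) * Mx (f x) (f y) == Mx x y) && (f x != f y).
  move=> x y ne; move: hdf; rewrite prodf_seq_eq0 => /hasPn /(_ (x, y) (mem_index_enum _)).
  by rewrite /= ne ev_lcI /=; case: ifP => //; rewrite eqxx.
have finj : injective f.
  move=> x y; case: (eqVneq x y) => // ne.
  by case/andP: (hfac x y ne) => _ /eqP.
have fbij : bijective f by apply: (inj_card_bij finj); rewrite hcard.
exists f; split => //; split.
  move=> x y; case: (eqVneq x y) => [->|ne]; first by rewrite !sadj_irr.
  case/andP: (hfac x y ne) => + _; rewrite /Mx.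
  case: (sadj (f x) (f y)); case: (sadj x y); case: (ssgn (f x) (f y)); case: (ssgn x y);
  case: (d x); case: (d y); vm_compute; intros Hh; first [reflexivity | discriminate Hh].
exists [set x | d x] => x y adj.
have ne : x != y by apply: contraTneq adj => ->; rewrite sadj_irr.
rewrite !inE.
case/andP: (hfac x y ne) => + _; rewrite /Mx adj.
case: (sadj (f x) (f y)); case: (ssgn (f x) (f y)); case: (ssgn x y);
case: (d x); case: (d y); vm_compute; intros Hh; first [reflexivity | discriminate Hh].
Qed.

Local Close Scope ring_scope.

Theorem theorem4p11 (A B C : sgraph) :
  0 < #|A| ->
  sg_equiv (cprod A B) (cprod A C) -> sg_equiv B C.
Proof. exact: main_thm. Qed.
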